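(* Let $n\geq 3$ be odd and $v=2(n+1)$. Then a $(K_2,K_{1,n})$-$URD(v;1,s)$ exists.
   Context: For graphs $H_1,H_2$, an $(H_1,H_2)$-$URD(v;r,s)$ is a decomposition of the edge set of the complete graph $K_v$ into edge-disjoint subgraphs (blocks), where the blocks are partitioned into $r+s$ classes, each class being a spanning collection of vertex-disjoint blocks (every vertex of $K_v$ lies in exactly one block of the class), such that $r$ classes consist only of copies of $H_1$ and $s$ classes consist only of copies of $H_2$. Here $K_2$ is a single edge and $K_{1,n}$ is the star with $n$ edges. *)

(* Defs.v *)
From mathcomp Require Import all_boot.
Set Implicit Arguments. Unset Strict Implicit. Unset Printing Implicit Defensive.

(* Vertices of K_v are 'I_v.  An edge is a 2-element subset of 'I_v.
   A block (subgraph of K_v) is given by its edge set : {set {set 'I_v}};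
   its vertex set is the union of its edges. *)

Definition is_edge (v : nat) (e : {set 'I_v}) : bool := #|e| == 2.

Definition block_verts (v : nat) (B : {set {set 'I_v}}) : {set 'I_v} :=
  \bigcup_(e in B) e.

Definition is_K2 (v : nat) (B : {set {set 'I_v}}) : Prop :=
  exists x y : 'I_v, x != y /\ B = [set [set x; y]].

Definition is_star (n v : nat) (B : {set {set 'I_v}}) : Prop :=
  exists (c : 'I_v) (L : {set 'I_v}),
    c \notin L /\ #|L| = n /\ B = [set [set c; l] | l in L].

Definition resolution_class (v : nat) (C : {set {set {set 'I_v}}}) : Prop :=
  forall x : 'I_v, exists! B, B \in C /\ x \in block_verts B.

(* (H1,H2)-URD(v; r, s): the edge set of K_v is decomposed into
   edge-disjoint blocks, partitioned into r+s resolution classes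
   (indexed by 'I_(r+s)); the first r classes consist of copies of H1,
   the last s of copies of H2. *)
Definition URD (v : nat) (H1 H2 : {set {set 'I_v}} -> Prop) (r s : nat) : Prop :=
  exists C : 'I_(r + s) -> {set {set {set 'I_v}}},
    [/\ forall i, resolution_class (C i),
        forall i : 'I_(r + s), i < r -> forall B, B \in C i -> H1 B,
        forall i : 'I_(r + s), r <= i -> forall B, B \in C i -> H2 B,
        forall i B e, B \in C i -> e \in B -> is_edge e
      & forall e : {set 'I_v}, is_edge e ->
          exists! p : 'I_(r + s) * {set {set 'I_v}}, p.2 \in C p.1 /\ e \in p.2].

(* Main.v *)
Require Import Defs.
From mathcomp Require Import all_boot.
From mathcomp Require Import zify.

Set Implicit Arguments.
Section Constr.
Variable n : nat.
Local Notation v := (2 * n.+1).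

Definition Mr (x y : 'I_v) : bool := (x %/ 2 == y %/ 2) && (nat_of_ord x != nat_of_ord y).
Definition arc (x y : 'I_v) : bool :=
  ((x %/ 2 < y %/ 2) && (x %% 2 == y %% 2)) || ((y %/ 2 < x %/ 2) && (x %% 2 != y %% 2)).
Definition Lv (c : 'I_v) : {set 'I_v} := [set y | arc c y].
Definition star (c : 'I_v) : {set {set 'I_v}} := [set [set c; l] | l in Lv c].
Definition CC (i : 'I_(1 + n.+1)) : {set {set {set 'I_v}}} :=
  if nat_of_ord i == 0 then [set B | [exists x, exists y, Mr x y && (B == [set [set x; y]])]]
  else [set B | [exists c : 'I_v, (c %/ 2 == (nat_of_ord i).-1) && (B == star c)]].

Lemma inCC i B : B \in CC i ->
  (nat_of_ord i = 0 /\ exists x y, Mr x y /\ B = [set [set x; y]]) \/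
  (0 < nat_of_ord i /\ exists c : 'I_v, c %/ 2 = (nat_of_ord i).-1 /\ B = star c).
Proof.
rewrite /CC; case: eqP => hi; rewrite inE.
  move/existsP => [x /existsP [y /andP [h /eqP ->]]]; left; split => //; by exists x, y.
move/existsP => [c /andP [/eqP h /eqP ->]]; right; split; first lia. by exists c.
Qed.

Lemma set2_eqP (x y a b : 'I_v) : [set x; y] = [set a; b] ->
  (x = a /\ y = b) \/ (x = b /\ y = a).
Proof.
move=> E.
have hx : x \in [set a; b] by rewrite -E set21.
have hy : y \in [set a; b] by rewrite -E set22.
have ha : a \in [set x; y] by rewrite E set21.
have hb : b \in [set x; y] by rewrite E set22.
move/set2P: hx; move/set2P: hy; move/set2P: ha; move/set2P: hb.
intuition subst; auto.
Qed.

Lemma leaf_ex (c : 'I_v) (j : nat) : j < n.+1 -> j != c %/ 2 ->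
  exists y : 'I_v, arc c y /\ y %/ 2 = j.
Proof.
move=> hj hjc; have := ltn_ord c => hc.
case: (ltnP (c %/ 2) j) => h.
  have hy : 2 * j + c %% 2 < v by lia.
  exists (Ordinal hy); rewrite /arc /=; split; lia.
have hy : 2 * j + (1 - c %% 2) < v by lia.
exists (Ordinal hy); rewrite /arc /=; split; lia.
Qed.

Lemma bv_star (c x : 'I_v) : 1 <= n ->
  (x \in block_verts (star c)) = (nat_of_ord x == nat_of_ord c) || arc c x.
Proof.
move=> hn; have := ltn_ord c => hc; have := ltn_ord x => hx.
apply/bigcupP/idP.
  move=> [e /imsetP [l hl ->]] /set2P [->|->]; first by rewrite eqxx.
  rewrite inE in hl; rewrite hl; lia.
move=> /orP [/eqP h | h].
  have hx' : x = c by apply: val_inj => /=.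
  have [l [hl _]] : exists l : 'I_v, arc c l /\ l %/ 2 = (if c %/ 2 == 0 then 1 else 0).
    case: (eqVneq (c %/ 2) 0) => e; apply: leaf_ex; lia.
  exists [set c; l]; first by apply/imsetP; exists l; rewrite ?inE.
  by rewrite hx' set21.
exists [set c; x]; first by apply/imsetP; exists x; rewrite ?inE.
by rewrite set22.
Qed.

Lemma card_Lv (c : 'I_v) : #|Lv c| = n.
Proof.
have := ltn_ord c => hc.
pose h := fun y : 'I_v => (inord (y %/ 2) : 'I_n.+1).
have inj : {in Lv c &, injective h}.
  move=> y z; rewrite !inE /h => hy hz E.
  have := congr1 val E => /=; rewrite !inordK; try (have := ltn_ord y; have := ltn_ord z; lia).
  move=> E'; apply: val_inj => /=; have := ltn_ord y; have := ltn_ord z; move: hy hz; rewrite /arc; lia.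
rewrite -(card_in_imset inj).
have -> : h @: Lv c = [set~ h c].
  apply/setP => j; rewrite !inE; apply/imsetP/idP.
    move=> [y hy ->]; apply/eqP => /(congr1 val); rewrite /h /= !inordK;
      try (have := ltn_ord y; lia).
    by move: hy; rewrite inE /arc; lia.
  move=> hj.
  have hj' : val j != c %/ 2.
    apply/eqP => E; move/eqP: hj; apply; apply: val_inj => /=; rewrite /h inordK -?E //; lia.
  have [y [hy hy2]] := @leaf_ex c j (ltn_ord j) hj'.
  exists y; first by rewrite inE.
  apply: val_inj => /=; rewrite /h inordK hy2 //; lia.
by rewrite cardsC1 card_ord.
Qed.

Lemma Mr_uniq (x y z : 'I_v) : Mr x y -> Mr x z -> y = z.
Proof. rewrite /Mr => h1 h2; apply: val_inj => /=; lia. Qed.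

Lemma Mr_ex (x : 'I_v) : exists y, Mr x y.
Proof.
have := ltn_ord x => hx.
have hy : x + 1 - 2 * (x %% 2) < v by lia.
exists (Ordinal hy); rewrite /Mr /=; lia.
Qed.

Lemma center_ex (k : nat) (x : 'I_v) : k < n.+1 ->
  exists c : 'I_v, c %/ 2 = k /\ (nat_of_ord x == nat_of_ord c) || arc c x.
Proof.
move=> hk; have := ltn_ord x => hx.
case: (eqVneq (x %/ 2) k) => h.
  by exists x; rewrite eqxx.
case: (ltnP k (x %/ 2)) => h2.
  have hc : 2 * k + x %% 2 < v by lia.
  exists (Ordinal hc); rewrite /arc /=; lia.
have hc : 2 * k + (1 - x %% 2) < v by lia.
exists (Ordinal hc); rewrite /arc /=; lia.
Qed.

Lemma center_uniq (x c c' : 'I_v) : c %/ 2 = c' %/ 2 ->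
  (nat_of_ord x == nat_of_ord c) || arc c x -> (nat_of_ord x == nat_of_ord c') || arc c' x -> c = c'.
Proof. rewrite /arc => h1 h2 h3; apply: val_inj => /=; lia. Qed.

Lemma classify (i : 'I_(1 + n.+1)) B (x y : 'I_v) :
  B \in CC i -> [set x; y] \in B ->
  (nat_of_ord i = 0 /\ Mr x y /\ B = [set [set x; y]]) \/
  (nat_of_ord i = x %/ 2 + 1 /\ arc x y /\ B = star x) \/
  (nat_of_ord i = y %/ 2 + 1 /\ arc y x /\ B = star y).
Proof.
move=> /inCC [[hi [a [b [hab ->]]]] | [hi [c [hc ->]]]].
  move/set1P/set2_eqP => [[-> ->] | [-> ->]].
    by left.
  left; split => //; split; first by move: hab; rewrite /Mr; lia.
  by rewrite setUC.
move/imsetP => [l]; rewrite inE => hl /set2_eqP [[-> ->] | [-> ->]].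
  right; left; split => //; lia.
by right; right; split => //; lia.
Qed.

Lemma CC_res i : 1 <= n -> resolution_class (CC i).
Proof.
move=> hn x; have := ltn_ord x => hx; have := ltn_ord i => hi.
case: (eqVneq (nat_of_ord i) 0) => h.
  have [y hy] := Mr_ex x.
  exists [set [set x; y]]; split.
    split; first by rewrite /CC h inE; apply/existsP; exists x; apply/existsP; exists y; rewrite hy eqxx.
    by rewrite /block_verts big_set1 set21.
  move=> B' [/inCC [[_ [a [b [hab ->]]]] | [hi' _]]]; last by lia.
  rewrite /block_verts big_set1 => /set2P [E | E]; subst x.
    by rewrite (@Mr_uniq _ _ _ hy hab).
  have hba : Mr b a by move: hab; rewrite /Mr; lia.
  by rewrite (@Mr_uniq _ _ _ hy hba) setUC.
have [c [hc hxc]] := @center_ex (nat_of_ord i).-1 x ltac:(lia).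
exists (star c); split.
  split; last by rewrite bv_star.
  rewrite /CC (negPf h) inE; apply/existsP; exists c; by rewrite hc !eqxx.
move=> B' [/inCC [[hi' _] | [_ [c' [hc' ->]]]]]; first by lia.
rewrite bv_star // => hx'.
by rewrite (@center_uniq x c c') // hc hc'.
Qed.

End Constr.
Unset Implicit Arguments.

Theorem lemma11 (n : nat) (Hn : 3 <= n) (Hodd : odd n) :
  exists s : nat, URD (@is_K2 (2 * n.+1)) (@is_star n (2 * n.+1)) 1 s.
Proof.
have hn : 1 <= n by lia.
exists n.+1, (@CC n); split.
- by move=> i; apply: CC_res.
- move=> i hi B /inCC [[_ [x [y [hxy ->]]]] | [hi' _]]; last by lia.
  exists x, y; split => //; apply/eqP => E; move: hxy; rewrite /Mr E; lia.
- move=> i hi B /inCC [[hi' _] | [_ [c [_ ->]]]].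
    by move: hi; rewrite hi'.
  exists c, (Lv c); split; last split => //.
    by rewrite inE /arc; lia.
  exact: card_Lv.
- move=> i B e /inCC [[_ [x [y [hxy ->]]]] | [_ [c [_ ->]]]].
    move/set1P => ->; rewrite /is_edge cards2.
    suff -> : x != y by []. apply/eqP => E; move: hxy; rewrite /Mr E; lia.
  move/imsetP => [l]; rewrite inE => hl ->; rewrite /is_edge cards2.
  suff -> : c != l by []. apply/eqP => E; move: hl; rewrite /arc E; lia.
- move=> e /cards2P [x [y [hxy ->]]].
  have hxy' : nat_of_ord x != nat_of_ord y by [].
  have := ltn_ord x => hx; have := ltn_ord y => hy.
  have tri : [|| Mr x y, arc x y | arc y x] by rewrite /Mr /arc; lia.
  case/or3P: tri => h.
  + have h0 : 0 < 1 + n.+1 by [].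
    exists (Ordinal h0, [set [set x; y]]); split.
      split => /=; last by rewrite set11.
      by rewrite /CC /= inE; apply/existsP; exists x; apply/existsP; exists y; rewrite h eqxx.
    move=> [i B] /= [HB He]; case: (@classify _ _ _ _ _ HB He) => [[hi [_ ->]] | [[_ [ha _]] | [_ [ha _]]]].
    * by congr pair; apply: val_inj => /=.
    * by move: h ha; rewrite /Mr /arc; lia.
    * by move: h ha; rewrite /Mr /arc; lia.
  + have h0 : x %/ 2 + 1 < 1 + n.+1 by lia.
    exists (Ordinal h0, star x); split.
      split => /=.
        by rewrite /CC /= addn1 /= inE; apply/existsP; exists x; rewrite /= !eqxx.
      by apply/imsetP; exists y; rewrite ?inE.
    move=> [i B] /= [HB He]; case: (@classify _ _ _ _ _ HB He) => [[_ [hm _]] | [[hi [_ ->]] | [_ [ha _]]]].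
    * by move: h hm; rewrite /Mr /arc; lia.
    * by congr pair; apply: val_inj => /=.
    * by move: h ha; rewrite /arc; lia.
  + have h0 : y %/ 2 + 1 < 1 + n.+1 by lia.
    exists (Ordinal h0, star y); split.
      split => /=.
        by rewrite /CC /= addn1 /= inE; apply/existsP; exists y; rewrite /= !eqxx.
      by apply/imsetP; exists x; rewrite ?inE // setUC.
    move=> [i B] /= [HB He]; case: (@classify _ _ _ _ _ HB He) => [[_ [hm _]] | [[_ [ha _]] | [hi [_ ->]]]].
    * by move: h hm; rewrite /Mr /arc; lia.
    * by move: h ha; rewrite /arc; lia.
    * by congr pair; apply: val_inj => /=.
Qed.
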